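(* Let $X$ be a real locally convex Hausdorff topological vector space with topological dual $X^*$. A nonempty subset $D\subset X$ is a convex polyhedron in $X$ if and only if there exist closed linear subspaces $X_0$, $X_1$ of $X$ and a convex polyhedron $D_1$ of the space $X_1$ such that $$X=X_0+X_1,\qquad X_0\cap X_1=\{0\},\qquad \dim X_1<+\infty,$$ and $$D=D_1+X_0.$$
   Context: For $x^*\in X^*$ and $x\in X$, $\langle x^*,x\rangle$ denotes the value of $x^*$ at $x$. A subset $C$ of a real locally convex Hausdorff topological vector space $Z$ is called a convex polyhedron (polyhedral convex set) of $Z$ if there exist finitely many $z_i^*\in Z^*$ and $\alpha_i\in\mathbb{R}$, $i=1,\dots,p$ ($p\ge 0$; the intersection of an empty family is $Z$), such that $C=\{z\in Z\mid \langle z_i^*,z\rangle\le\alpha_i,\ i=1,\dots,p\}$. Here $X_1$ is regarded with the topology induced from $X$, and $D_1$ being a convex polyhedron of $X_1$ means this definition with $Z=X_1$. *)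

(* Defs.v *)
From HB Require Import structures.
From mathcomp Require Import all_boot all_order all_algebra.
From mathcomp Require Import all_classical all_reals all_analysis.
Set Implicit Arguments. Unset Strict Implicit. Unset Printing Implicit Defensive.
Import Order.TTheory GRing.Theory Num.Theory.
Local Open Scope classical_set_scope.
Local Open Scope ring_scope.
Import numFieldNormedType.Exports.

(* Real locally convex spaces: [tvsType R] (locally convex by definition). *)

Definition lin_functional (R : realType) (E : tvsType R) (f : E -> R) : Prop :=
  forall (a : R) (x y : E), f (a *: x + y) = a * f x + f y.

Definition dual_elt (R : realType) (E : tvsType R) (f : E -> R) : Prop :=
  lin_functional f /\ continuous f.

Definition convex_polyhedron (R : realType) (E : tvsType R) (C : set E) : Prop :=
  exists (p : nat) (z : 'I_p -> E -> R) (alpha : 'I_p -> R),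
    (forall i, dual_elt (z i)) /\
    C = [set x | forall i, z i x <= alpha i].

Definition lin_subspace (R : realType) (E : tvsType R) (S : set E) : Prop :=
  S 0 /\ forall (a : R) (x y : E), S x -> S y -> S (a *: x + y).

(* A functional on the subspace S (represented by any function on E, only its
   restriction to S matters) which is linear on S and continuous for the
   topology induced on S: an element of S^*. *)
Definition sub_dual_elt (R : realType) (E : tvsType R) (S : set E)
    (f : E -> R) : Prop :=
  (forall (a : R) (x y : E), S x -> S y -> f (a *: x + y) = a * f x + f y) /\
  {within S, continuous f}.

Definition convex_polyhedron_in (R : realType) (E : tvsType R) (S C : set E) : Prop :=
  exists (p : nat) (z : 'I_p -> E -> R) (alpha : 'I_p -> R),
    (forall i, sub_dual_elt S (z i)) /\
    C = [set x | S x /\ forall i, z i x <= alpha i].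

Definition finite_dim (R : realType) (E : tvsType R) (S : set E) : Prop :=
  exists (n : nat) (v : 'I_n -> E),
    S = [set x | exists c : 'I_n -> R, x = \sum_(i < n) c i *: v i].

(* Main.v *)
Require Import Defs.
From HB Require Import structures.
From mathcomp Require Import all_boot all_order all_algebra.
From mathcomp Require Import all_classical all_reals all_analysis.
Import Order.TTheory GRing.Theory Num.Theory.
Local Open Scope classical_set_scope.
Local Open Scope ring_scope.
Import numFieldNormedType.Exports.
From mathcomp Require Import ring lra.
Set Implicit Arguments. Unset Strict Implicit.
Section Lin.
Context (R : realType) (X : tvsType R).

Lemma lf0 (f : X -> R) : lin_functional f -> f 0 = 0.
Proof. by move=> hf; have := hf (-1) 0 0; rewrite scaler0 addr0 mulN1r addNr. Qed.
Lemma lfD (f : X -> R) : lin_functional f -> forall x y, f (x + y) = f x + f y.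
Proof. by move=> hf x y; have := hf 1 x y; rewrite scale1r mul1r. Qed.
Lemma lfZ (f : X -> R) : lin_functional f -> forall a x, f (a *: x) = a * f x.
Proof. by move=> hf a x; have := hf a x 0; rewrite !addr0 lf0 // addr0. Qed.
Lemma lfN (f : X -> R) : lin_functional f -> forall x, f (- x) = - f x.
Proof. by move=> hf x; rewrite -scaleN1r lfZ // mulN1r. Qed.
Lemma lfB (f : X -> R) : lin_functional f -> forall x y, f (x - y) = f x - f y.
Proof. by move=> hf x y; rewrite lfD // lfN. Qed.
Lemma lfsum (f : X -> R) n (c : 'I_n -> R) (v : 'I_n -> X) : lin_functional f ->
  f (\sum_(i < n) c i *: v i) = \sum_(i < n) c i * f (v i).
Proof.
move=> hf; apply: (big_rec2 (fun a b => f b = a)); first exact: lf0.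
by move=> i a b _ <-; rewrite hf.
Qed.

Lemma ls0 (S : set X) : lin_subspace S -> S 0. Proof. by case. Qed.
Lemma lsD (S : set X) : lin_subspace S -> forall x y, S x -> S y -> S (x + y).
Proof. by move=> [_ h] x y sx sy; have := h 1 x y sx sy; rewrite scale1r. Qed.
Lemma lsZ (S : set X) : lin_subspace S -> forall a x, S x -> S (a *: x).
Proof. by move=> [h0 h] a x sx; have := h a x 0 sx h0; rewrite addr0. Qed.
Lemma lsN (S : set X) : lin_subspace S -> forall x, S x -> S (- x).
Proof. by move=> hS x sx; rewrite -scaleN1r; apply: lsZ. Qed.
Lemma lsB (S : set X) : lin_subspace S -> forall x y, S x -> S y -> S (x - y).
Proof. by move=> hS x y sx sy; apply: lsD => //; apply: lsN. Qed.

Lemma lemN (Y : set X) (w : X) : lin_subspace Y -> closed Y -> ~ Y w ->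
  exists U : set X, nbhs 0 U /\
    forall y t, Y y -> U (y + t *: w) -> `|t| < 1.
Proof.
move=> hY cY nYw.
have nw : nbhs w (~` Y).
  by apply: open_nbhs_nbhs; split => //; rewrite openC.
have nB : nbhs (0 : X) [set v | ~ Y (w - v)].
  have := nbhsB (- w) nw; rewrite addNr => /nbhs0N.
  apply: filterS => v [u [c nc <-] <-]; by rewrite /= opprK addrA subrr add0r.
have := scale_continuous ((0 : R^o), (0 : X)) _ ; rewrite scaler0 => /(_ _ nB).
move=> [/= [B1 B2] [nB1 nB2] BU].
move: nB1 => /nbhs_ballP [d /= d0 dB1].
exists ( *:%R (d / 2) @` B2); split; first by apply: nbhs0Z => //; rewrite mulf_neq0 // ?gt_eqF // invr_neq0.
move=> y t Yy [u B2u ue]; rewrite ltNge; apply/negP => t1.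
have t0 : t != 0 by apply: contraTneq t1 => ->; rewrite normr0 ler10.
have := BU (t^-1 * (d / 2), u) => /=; rewrite -scalerA ue.
rewrite scalerDr scalerA mulVf // scale1r opprD addrCA subrr addr0.
move=> h; apply: h; last by apply: lsN => //; exact: lsZ.
split => //=.
apply: dB1; rewrite /ball /= sub0r normrN normrM normrV ?unitfE //.
have d2 : `|d / 2| = d / 2 by rewrite gtr0_norm // divr_gt0.
rewrite d2 ltr_pdivrMl ?(lt_le_trans ltr01 t1) //.
have : d / 2 * 1 <= d / 2 * `|t| by rewrite ler_pM2l ?divr_gt0.
lra.
Qed.

Lemma lemN' (Y : set X) (w : X) : lin_subspace Y -> closed Y -> ~ Y w ->
  forall e : R, 0 < e -> exists V : set X, nbhs 0 V /\
    (forall y t, Y y -> V (y + t *: w) -> `|t| < e).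
Proof.
move=> hY cY nYw e e0; have [U [nU HU]] := lemN hY cY nYw.
exists ( *:%R e @` U); split; first by apply: nbhs0Z => //; rewrite gt_eqF.
move=> y t Yy [u Uu ue].
have : U (e^-1 *: y + (t / e) *: w).
  have -> : e^-1 *: y + (t / e) *: w = u.
    by rewrite mulrC -scalerA -scalerDr -ue scalerA mulVf ?gt_eqF // scale1r.
  by [].
move/HU => /(_ (lsZ hY _ Yy)); rewrite normrM normrV ?unitfE ?gt_eqF //.
by rewrite (gtr0_norm e0) ltr_pdivrMr // mul1r.
Qed.

Lemma lemK (Y : set X) (F : X -> R) (u : X) : lin_subspace Y -> closed Y ->
  lin_functional F -> (forall y, Y y -> F y = 0) -> F u = 1 ->
  (forall x, exists y t, Y y /\ x = y + t *: u) -> continuous F.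
Proof.
move=> hY cY hF FY Fu dec x.
have nYu : ~ Y u by move=> /FY; rewrite Fu; apply/eqP; rewrite oner_eq0.
apply/cvgrPdist_lt => e e0.
have [V [nV HV]] := lemN' hY cY nYu e0.
have := nbhsT x nV; apply: filterS => p [v Vv <-] /=.
have [y [t [Yy vE]]] := dec v.
rewrite lfD // opprD addrA subrr add0r normrN.
have -> : F v = t by rewrite vE lfD // lfZ // FY // Fu add0r mulr1.
by apply: (HV y) => //; rewrite -vE.
Qed.

Lemma nbhs_sub (V : set X) : nbhs 0 V ->
  exists A : set X, nbhs 0 A /\ forall a b, A a -> A b -> V (a - b).
Proof.
move=> nV; have := @add_continuous X (0, 0) V; rewrite /= addr0 => /(_ nV).
move=> [/= [B1 B2] [nB1 nB2] BU].
exists (B1 `&` (-%R @` B2)); split.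
  by apply: filterI => //; apply: nbhs0N.
move=> a b [Ba _] [_ [b' Bb' <-]]; rewrite opprK.
by apply: (BU (a, b')).
Qed.

Lemma lemC1 (Y : set X) (w : X) : lin_subspace Y -> closed Y ->
  closed [set x | exists y t, Y y /\ x = y + t *: w].
Proof.
move=> hY cY.
set Z := [set x | exists y t, Y y /\ x = y + t *: w].
case: (pselect (Y w)) => Yw.
  have -> : Z = Y; last by [].
  apply/seteqP; split => x.
    by move=> [y [t [Yy ->]]]; apply: lsD => //; apply: lsZ.
  by move=> Yx; exists x, 0; rewrite scale0r addr0.
pose tc (p : X) : R := xget 0 [set t | Y (p - t *: w)].
have tcP p : Z p -> Y (p - tc p *: w).
  move=> [y [t [Yy pE]]]; apply: (@xgetPex _ 0 [set t | Y (p - t *: w)]).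
  by exists t; rewrite /= pE addrK.
move=> x clx.
pose F := within Z (nbhs x).
have PF : ProperFilter F by apply: within_nbhs_proper.
have cF : cauchy (tc @ F).
  apply: cauchy_exP => e e0.
  have [V [nV HV]] := lemN' hY cY Yw e0.
  have [A [nA HA]] := nbhs_sub nV.
  have [p0 [Zp0 [a0 Aa0 a0E]]] := clx _ (nbhsT x nA).
  exists (tc p0).
  suff : \forall q \near F, ball (tc p0) e (tc q) by []. rewrite near_withinE.
  have := nbhsT x nA; apply: filterS => q [a Aa <-] Zq /=.
  rewrite -ball_normE /ball_ /=.
  apply: (HV ((p0 - tc p0 *: w) - ((x + a) - tc (x + a) *: w))).
    by apply: lsB => //; apply: tcP.
  have -> : p0 - tc p0 *: w - (x + a - tc (x + a) *: w) +
    (tc p0 - tc (x + a)) *: w = (a0 - a).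
    rewrite -a0E scalerBl; set u := tc _ *: w; set v := tc _ *: w.
    by rewrite !opprD !opprK !addrA (addrAC _ u (- v)) addrK (addrAC _ (- a) u) (addrAC _ (- x) u) subrK (addrAC x a0 (- x)) subrr add0r.
  by apply: HA.
have cvF : tc @ F --> lim (tc @ F) by exact: cauchy_cvg.
set tau := lim (tc @ F) in cvF.
have gcv : (fun p => p + (- tc p) *: w) @ F --> x + (- tau) *: w.
  apply: (@cvg_comp _ _ _ (fun p => (p, (- tc p) *: w)) (fun z : X * X => z.1 + z.2) _ (nbhs (x, (- tau) *: w))); last first.
    exact: (@add_continuous X (x, (- tau) *: w)).
  apply: cvg_pair; first exact: cvg_within.
  apply: (@cvg_comp _ _ _ (fun p => ((- tc p : R^o), w)) (fun z : R^o * X => z.1 *: z.2) _ (nbhs ((- tau : R^o), w))); last first.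
    exact: (@scale_continuous R X ((- tau : R^o), w)).
  have h1 : (fun p => - tc p : R^o) @ F --> (- tau : R^o) by have := cvgN cvF; apply.
  exact: (cvg_pair h1 (cvg_cst w)).

have : Y (x + (- tau) *: w).
  apply: (closed_cvg _ cY _ _ gcv).
  rewrite /F near_withinE; apply: nearW => p Zp.
  by rewrite scaleNr; apply: tcP.
move=> HY; exists (x + (- tau) *: w), tau; split => //.
by rewrite scaleNr subrK.
Qed.

Definition spanY n (Y : set X) (w : 'I_n -> X) : set X :=
  [set x | exists y (c : 'I_n -> R), Y y /\ x = y + \sum_(i < n) c i *: w i].

Lemma span_sub n (Y : set X) (w : 'I_n -> X) : lin_subspace Y ->
  lin_subspace (spanY Y w).
Proof.
move=> hY; split.
  by exists 0, (fun _ => 0); split; [exact: ls0|]; rewrite big1 ?addr0 // => i _; rewrite scale0r.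
move=> a x1 x2 [y1 [c1 [Y1 ->]]] [y2 [c2 [Y2 ->]]].
exists (a *: y1 + y2), (fun i => a * c1 i + c2 i); split.
  by apply: lsD => //; apply: lsZ.
rewrite scalerDr scaler_sumr.
under [X in _ = _ + X]eq_bigr do rewrite scalerDl -scalerA.
by rewrite big_split /= !addrA; congr (_ + _); rewrite -!addrA; congr (_ + _); rewrite addrC.
Qed.

Lemma lemCn n : forall (Y : set X) (w : 'I_n -> X), lin_subspace Y -> closed Y ->
  closed (spanY Y w).
Proof.
elim: n => [|n IH] Y w hY cY.
  have -> : spanY Y w = Y; last by [].
  apply/seteqP; split => x.
    by move=> [y [c [Yy ->]]]; rewrite big_ord0 addr0.
  by move=> Yx; exists x, (fun _ => 0); rewrite big_ord0 addr0.
set Y' := [set x | exists y t, Y y /\ x = y + t *: w ord0].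
have hY' : lin_subspace Y'.
  have -> : Y' = spanY Y (fun _ : 'I_1 => w ord0).
    apply/seteqP; split => x.
      move=> [y [t [Yy ->]]]; exists y, (fun _ => t); split => //.
      by rewrite big_ord1.
    by move=> [y [c [Yy ->]]]; exists y, (c ord0); split => //; rewrite big_ord1.
  exact: span_sub.
have cY' : closed Y' by apply: lemC1.
have -> : spanY Y w = spanY Y' (fun i => w (lift ord0 i)); last exact: IH.
apply/seteqP; split => x.
  move=> [y [c [Yy ->]]]; exists (y + c ord0 *: w ord0), (fun i => c (lift ord0 i)).
  split; first by exists y, (c ord0).
  by rewrite big_ord_recl addrA.
move=> [y' [c [[y [t [Yy ->]]] ->]]].
exists y, (fun i => if unlift ord0 i is Some j then c j else t); split => //.
rewrite big_ord_recl unlift_none -addrA; congr (_ + _).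
congr (_ + _); apply: eq_bigr => i _; by rewrite liftK.
Qed.

Lemma lemL n (Y : set X) (w : 'I_n -> X) (F : X -> R) : lin_subspace Y -> closed Y ->
  (forall x, spanY Y w x) -> lin_functional F -> (forall y, Y y -> F y = 0) ->
  continuous F.
Proof.
move=> hY cY dec hF FY.
case: (pselect (forall i, F (w i) = 0)) => Fw.
  have -> : F = fun _ => 0.
    apply/funext => x; have [y [c [Yy ->]]] := dec x.
    rewrite lfD // lfsum // FY // add0r big1 // => i _; by rewrite Fw mulr0.
  by move=> x; apply: cvg_cst.
have [i0 Fi0] : exists i, F (w i) <> 0.
  by apply/existsNP => h; apply: Fw.
pose u := (F (w i0))^-1 *: w i0.
have Fu : F u = 1 by rewrite lfZ // mulVf //; apply/eqP.
pose w' i := w i - F (w i) *: u.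
apply: (@lemK (spanY Y w') F u) => //.
- exact: span_sub.
- exact: lemCn.
- move=> x [y [c [Yy ->]]]; rewrite lfD // lfsum // FY // add0r big1 // => i _.
  by rewrite /w' lfB // lfZ // Fu mulr1 subrr mulr0.
- move=> x; have [y [c [Yy ->]]] := dec x.
  exists (y + \sum_(i < n) c i *: w' i), (\sum_(i < n) c i * F (w i)); split.
    by exists y, c.
  rewrite -addrA; congr (_ + _).
  rewrite scaler_suml -big_split /=; apply: eq_bigr => i _.
  by rewrite /w' scalerBr -scalerA subrK.
Qed.

Lemma lemE p : forall (z : 'I_p -> X -> R), (forall i, lin_functional (z i)) ->
  exists n (v : 'I_n -> X),
    (forall x, exists c : 'I_n -> R, forall i, z i (x - \sum_(j < n) c j *: v j) = 0) /\
    (forall c : 'I_n -> R, (forall i, z i (\sum_(j < n) c j *: v j) = 0) ->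
       \sum_(j < n) c j *: v j = 0).
Proof.
elim: p => [|p IH] z hz.
  exists 0, (fun _ => 0); split.
    by move=> x; exists (fun _ => 0) => -[].
  by move=> c _; rewrite big_ord0.
pose z' i := z (lift ord0 i).
have hz' i : lin_functional (z' i) by apply: hz.
pose z0 := z ord0.
have hz0 : lin_functional z0 by apply: hz.
have zE (f : forall i, Prop) : (forall i, f i) <-> f ord0 /\ forall i, f (lift ord0 i).
  split; first by move=> h; split.
  move=> [h0 h] i; case: (unliftP ord0 i) => [j ->|->] //.
have [n' [v' [Ha Hb]]] := IH z' hz'.
case: (pselect (exists u, (forall i, z' i u = 0) /\ z0 u = 1)) => [[u [z'u z0u]]|nu].
  pose v (j : 'I_n'.+1) := if unlift ord0 j is Some k then v' k - z0 (v' k) *: u else u.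
  have sumE (c : 'I_n'.+1 -> R) : \sum_(j < n'.+1) c j *: v j =
      (c ord0 - \sum_(k < n') c (lift ord0 k) * z0 (v' k)) *: u +
      \sum_(k < n') c (lift ord0 k) *: v' k.
    rewrite big_ord_recl /v unlift_none.
    under eq_bigr do rewrite liftK scalerBr scalerA.
    by rewrite sumrB scalerBl -scaler_suml addrA addrAC.
  exists n'.+1, v; split.
    move=> x; have [c' hc'] := Ha x.
    set r := x - \sum_(k < n') c' k *: v' k in hc'.
    pose c j := if unlift ord0 j is Some k then c' k
                else z0 r + \sum_(k < n') c' k * z0 (v' k).
    have cL k : c (lift ord0 k) = c' k by rewrite /c liftK.
    have e1 : \sum_(k < n') c (lift ord0 k) * z0 (v' k) = \sum_(k < n') c' k * z0 (v' k).
      by apply: eq_bigr => k _; rewrite cL.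
    have e2 : \sum_(k < n') c (lift ord0 k) *: v' k = \sum_(k < n') c' k *: v' k.
      by apply: eq_bigr => k _; rewrite cL.
    exists c; rewrite sumE e1 e2 /c unlift_none -/c.
    rewrite addrK.
    have -> : x - (z0 r *: u + \sum_(k < n') c' k *: v' k) = r - z0 r *: u.
      by rewrite /r opprD addrCA addrC.
    apply/zE; split.
      by rewrite -/z0 lfB // lfZ // z0u mulr1 subrr.
    by move=> i; rewrite -/(z' i) lfB // lfZ // hc' z'u mulr0 subrr.
  move=> c /zE [h0 h].
  have hs : \sum_(k < n') c (lift ord0 k) *: v' k = 0.
    apply: Hb => i; have := h i; rewrite -/(z' i) sumE lfD // lfZ // z'u mulr0 add0r.
    by [].
  have hs0 : \sum_(k < n') c (lift ord0 k) * z0 (v' k) = 0.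
    by rewrite -lfsum // hs lf0.
  move: h0; rewrite -/z0 sumE hs hs0 subr0 addr0 lfZ // z0u mulr1 => ->.
  by rewrite scale0r.
have nu' y : (forall i, z' i y = 0) -> z0 y = 0.
  move=> hy; apply/eqP/negP => /negP h; apply: nu.
  exists ((z0 y)^-1 *: y); split; first by move=> i; rewrite lfZ // hy mulr0.
  by rewrite lfZ // mulVf.
exists n', v'; split.
  move=> x; have [c hc] := Ha x; exists c; apply/zE; split; last exact: hc.
  exact: nu'.
move=> c /zE [_ h]; exact: Hb.
Qed.
End Lin.

Lemma sub_lin0 (R : realType) (X : tvsType R) (S : set X) (g : X -> R) :
  S 0 -> (forall (a : R) (x y : X), S x -> S y -> g (a *: x + y) = a * g x + g y) ->
  g 0 = 0.
Proof. by move=> S0 hg; have := hg (-1) 0 0 S0 S0; rewrite scaler0 addr0 mulN1r addNr. Qed.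

Unset Implicit Arguments.
Unset Strict Implicit.

Theorem proposition2p6 (R : realType) (X : tvsType R)
    (hX : hausdorff_space X) (D : set X) (hD : D !=set0) :
  convex_polyhedron D <->
  exists (X0 X1 D1 : set X),
    [/\ lin_subspace X0 /\ closed X0, lin_subspace X1 /\ closed X1,
        [set x | exists x0 x1, [/\ X0 x0, X1 x1 & x = x0 + x1]] = setT,
        X0 `&` X1 = [set 0] & finite_dim X1] /\
    convex_polyhedron_in X1 D1 /\
    D = [set x | exists d1 x0, [/\ D1 d1, X0 x0 & x = d1 + x0]].
Proof.
split.
  move=> [p [z [al [hz DE]]]]; subst D.
  have hzl i : lin_functional (z i) by case: (hz i).
  have [n [v [Ha Hb]]] := lemE hzl.
  pose X0 := [set x | forall i, z i x = 0].
  pose X1 := [set x | exists c : 'I_n -> R, x = \sum_(i < n) c i *: v i].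
  have X1E : X1 = spanY [set 0] v.
    apply/seteqP; split => x.
      by move=> [c ->]; exists 0, c; rewrite add0r.
    by move=> [y [c [/= -> ->]]]; exists c; rewrite add0r.
  have hX1 : lin_subspace X1.
    by rewrite X1E; apply: span_sub; split => // a x y /= -> ->; rewrite scaler0 addr0.
  have X10 : X1 0 by case: hX1.
  have hX0 : lin_subspace X0.
    split; first by move=> i; rewrite lf0.
    by move=> a x y hx hy i; rewrite /= hzl hx hy mulr0 addr0.
  exists X0, X1, [set x | X1 x /\ forall i, z i x <= al i].
  split; first split.
  - split => // x clx i; apply: contrapT => nz.
    have hc := (hz i).2 x.
    have : 0 < `|z i x| by rewrite normr_gt0; apply/eqP.
    move=> /(proj1 (cvgrPdist_lt _ _) hc) nb.
    have [q [X0q /= hq]] := clx _ nb.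
    by move: hq; rewrite X0q subr0 ltxx.
  - split => //; rewrite X1E; apply: lemCn.
      by split => // a x y /= -> ->; rewrite scaler0 addr0.
    exact/accessible_closed_set1/hausdorff_accessible.
  - apply/seteqP; split => // x _.
    have [c hc] := Ha x.
    exists (x - \sum_(j < n) c j *: v j), (\sum_(j < n) c j *: v j); split => //.
      by exists c.
    by rewrite subrK.
  - apply/seteqP; split => x.
      move=> [X0x [c xE]]; rewrite /= xE; apply: Hb => i; rewrite -xE; exact: X0x.
    by move=> /= ->; split => //; case: hX0.
  - by exists n, v.
  split.
    exists p, z, al; split => //.
    move=> i; split; first by move=> a x y _ _; apply: hzl.
    exact/continuous_subspaceT/(hz i).2.
  apply/seteqP; split => x.
    move=> /= hx; have [c hc] := Ha x.
    exists (\sum_(j < n) c j *: v j), (x - \sum_(j < n) c j *: v j); split => //.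
    + split; first by exists c.
      move=> i; have := hc i; rewrite lfB // => /eqP; rewrite subr_eq0 => /eqP <-.
      exact: hx.
    + by rewrite addrC subrK.
  move=> [d1 [x0 [[X1d1 hd1] X0x0 ->]]] i /=.
  by rewrite lfD // X0x0 addr0.
move=> [X0 [X1 [D1 [[[hX0 cX0] [hX1 cX1] sumT capE [n [v X1E]]] [[p [g [al [hg D1E]]]] DE]]]]].
have X10 : X1 0 by case: hX1.
have X00 : X0 0 by case: hX0.
pose P x := xget 0 [set x1 | X1 x1 /\ X0 (x - x1)].
have PP x : X1 (P x) /\ X0 (x - P x).
  apply: (@xgetPex _ 0 [set x1 | X1 x1 /\ X0 (x - x1)]).
  have : setT x by [].
  rewrite -sumT => -[x0 [x1 [X0x0 X1x1 ->]]].
  by exists x1; split => //; rewrite addrK.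
have Puniq x a : X1 a -> X0 (x - a) -> P x = a.
  move=> X1a X0a; have [X1P X0P] := PP x.
  apply/eqP; rewrite -subr_eq0; apply/eqP.
  have : (X0 `&` X1) (P x - a).
    split; last exact: lsB.
    have -> : P x - a = (x - a) - (x - P x) by rewrite opprB [X in _ = X]addrC addrA subrK.
    exact: lsB.
  by rewrite capE.
pose F i x := g i (P x).
have hgl i := (hg i).1.
have g0 i : g i 0 = 0 by apply: (sub_lin0 X10 (hgl i)).
exists p, F, al; split.
  move=> i; have hF : lin_functional (F i).
    move=> a x y; rewrite /F.
    have -> : P (a *: x + y) = a *: P x + P y.
      apply: (Puniq (a *: x + y) (a *: P x + P y)); first by apply: (lsD hX1); [apply: (lsZ hX1); case: (PP x) | case: (PP y)].
      have -> : a *: x + y - (a *: P x + P y) = a *: (x - P x) + (y - P y).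
        by rewrite scalerBr opprD !addrA; congr (_ - _); rewrite addrAC.
      by apply: (lsD hX0); [apply: (lsZ hX0); case: (PP x) | case: (PP y)].
    by apply: hgl; case: (PP x); case: (PP y).
  split => //.
  apply: (@lemL _ _ n X0 v) => //.
    move=> x; have [X1P X0P] := PP x; rewrite X1E in X1P; case: X1P => c hc.
    exists (x - P x), c; split => //; by rewrite -hc subrK.
  by move=> y X0y; rewrite /F (Puniq y 0) // subr0.
rewrite DE; apply/seteqP; split => x.
  move=> [d1 [x0 [D1d1 X0x0 ->]]] i; rewrite /F.
  move: D1d1; rewrite D1E => -[X1d1 hd1].
  have -> : P (d1 + x0) = d1 by apply: (Puniq (d1 + x0) d1) => //; rewrite addrAC subrr add0r.
  exact: hd1.
move=> hx; exists (P x), (x - P x); split.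
- by rewrite D1E; split; [case: (PP x)|exact: hx].
- by case: (PP x).
- by rewrite addrC subrK.
Qed.
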